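(* For any field $\mathbb{F}$, $l_0(M_2(\mathbb{F}))=2$; that is, the maximum of $l_0(\mathcal S)$ over all finite generating sets $\mathcal S$ of $M_2(\mathbb{F})$ equals $2$.
   Context: For a finite subset $\mathcal S$ of $M_n(\mathbb{F})$: a word of length $m$ in $\mathcal S$ is a product $S_1\cdots S_m$ with $S_j\in\mathcal S$. $\mathcal L_k^0(\mathcal S)$ is the linear span of all words of length between $1$ and $k$ (the identity is not automatically included), and $\mathcal L^0(\mathcal S)=\bigcup_k\mathcal L^0_k(\mathcal S)$. $\mathcal S$ is a generating set of $M_n(\mathbb{F})$ if the algebra it generates (with or without adjoining the identity; these coincide for $M_n(\mathbb{F})$) is $M_n(\mathbb{F})$. $l_0(\mathcal S)$ is the smallest $k$ with $\mathcal L_k^0(\mathcal S)=\mathcal L_{k+1}^0(\mathcal S)$, and $l_0(M_n(\mathbb{F}))$ is the maximum of $l_0(\mathcal S)$ over all finite generating sets $\mathcal S$ of $M_n(\mathbb{F})$. *)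

(* Defs.v *)
From HB Require Import structures.
From mathcomp Require Import all_boot all_order all_algebra.
Set Implicit Arguments. Unset Strict Implicit. Unset Printing Implicit Defensive.
Import GRing.Theory.
Local Open Scope ring_scope.

Section Words.
Variables (F : fieldType) (n : nat).

Fixpoint words (S : seq 'M[F]_n.+1) (m : nat) : seq 'M[F]_n.+1 :=
  match m with
  | 0 => [:: 1]
  | m'.+1 => [seq A * B | A <- S, B <- words S m']
  end.

Definition L0 (S : seq 'M[F]_n.+1) (k : nat) : {vspace 'M[F]_n.+1} :=
  (<< flatten [seq words S m | m <- iota 1 k] >>)%VS.

(* S generates M_n(F): the (non-unital) algebra generated, i.e. the union of
   the increasing chain L_k^0(S), is the whole matrix algebra *)
Definition generates (S : seq 'M[F]_n.+1) : Prop :=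
  exists k, L0 S k = fullv.

Definition is_l0 (S : seq 'M[F]_n.+1) (k : nat) : Prop :=
  L0 S k = L0 S k.+1 /\ (forall j, (j < k)%N -> L0 S j <> L0 S j.+1).

End Words.

(* Main.v *)
Require Import Defs.
From HB Require Import structures.
From mathcomp Require Import all_boot all_order all_algebra.
From mathcomp Require Import ring.
Import GRing.Theory.

Section Aux.
Local Open Scope ring_scope.
Variable F : fieldType.
Notation M := ('M[F]_2).

Lemma m2 (X Y : M) i j : (X * Y) i j = X i 0 * Y 0 j + X i 1 * Y 1 j.
Proof. rewrite -mulmxE mxE !big_ord_recl big_ord0 addr0.
have -> : (lift ord0 ord0 : 'I_2) = 1 by apply/val_inj.
by []. Qed.

Lemma ord2 (i : 'I_2) : i = 0 \/ i = 1.
Proof. case: i => [[|[|?]] Hi]; [left|right|] => //; exact: val_inj. Qed.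

Definition tr2 (A : M) := A 0 0 + A 1 1.
Definition dt2 (A : M) := A 0 0 * A 1 1 - A 0 1 * A 1 0.

Ltac entr := apply/matrixP; do 2 (let k := fresh "k" in move=> k; case: (ord2 k) => ->);
  rewrite !(m2, mxE) /tr2 /dt2 ?m2; ring.

Lemma i1 (A : M) : A * (A * A) = tr2 A *: (A * A) + (- dt2 A) *: A.
Proof. entr. Qed.
Lemma i2 (A B : M) : A * (A * B) = tr2 A *: (A * B) + (- dt2 A) *: B.
Proof. entr. Qed.
Lemma i3 (A B : M) : A * (B * B) = tr2 B *: (A * B) + (- dt2 B) *: A.
Proof. entr. Qed.
Lemma i4 (A B : M) : A * (B * A) =
  tr2 B *: (A * A) + (tr2 (A * B) - tr2 A * tr2 B) *: A + dt2 A *: B.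
Proof. entr. Qed.


Lemma d4 : \dim (fullv : {vspace M}) = 4%N.
Proof. by rewrite dimvf /dim /= ?mxvec_dim. Qed.

Lemma span_ind (X : seq M) (P : M -> Prop) : P 0 ->
  (forall a b, P a -> P b -> P (a + b)) -> (forall k a, P a -> P (k *: a)) ->
  (forall x, x \in X -> P x) -> forall v, v \in <<X>>%VS -> P v.
Proof.
move=> P0 PD PZ PX v Hv.
rewrite (@coord_span _ _ _ (in_tuple X) v Hv).
apply: (big_ind P) => // i _; apply: PZ; apply: PX; apply: mem_nth.
exact: ltn_ord.
Qed.

Lemma bilin (X Y : seq M) (W : {vspace M}) :
  (forall a b, a \in X -> b \in Y -> a * b \in W) ->
  forall x y, x \in <<X>>%VS -> y \in <<Y>>%VS -> x * y \in W.
Proof.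
move=> H x y Hx Hy; move: x Hx; apply: span_ind.
- by rewrite mul0r mem0v.
- by move=> a b Ha Hb; rewrite mulrDl memvD.
- by move=> k a Ha; rewrite -scalerAl memvZ.
move=> a Ha; move: y Hy; apply: span_ind.
- by rewrite mulr0 mem0v.
- by move=> u v Hu Hv; rewrite mulrDr memvD.
- by move=> k u Hu; rewrite -scalerAr memvZ.
by move=> b Hb; apply: H.
Qed.

Lemma words_sub (S : seq M) (W : {vspace M}) :
  (forall s, s \in S -> s \in W) -> (forall s x, s \in S -> x \in W -> s * x \in W) ->
  forall m w, w \in words S m.+1 -> w \in W.
Proof.
move=> H1 H2; elim=> [|m IH] w /allpairsP [[a b] [/= Ha Hb ->]].
  by move: Hb; rewrite inE => /eqP ->; rewrite mulr1 H1.
by apply: H2 => //; apply: IH.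
Qed.

Lemma L0_sub (S : seq M) (W : {vspace M}) :
  (forall s, s \in S -> s \in W) -> (forall s x, s \in S -> x \in W -> s * x \in W) ->
  forall k, (L0 S k <= W)%VS.
Proof.
move=> H1 H2 k; apply/span_subvP => x /flattenP [ws /mapP [m Hm ->] Hx].
move: Hm; rewrite mem_iota; case: m Hx => // m Hx _.
exact: (@words_sub S W H1 H2 _ _ Hx).
Qed.

Lemma closed_full (S : seq M) (W : {vspace M}) : generates S ->
  (forall s, s \in S -> s \in W) -> (forall s x, s \in S -> x \in W -> s * x \in W) ->
  W = fullv.
Proof.
move=> [k Hk] H1 H2; apply/eqP; rewrite eqEsubv subvf /= -Hk.
exact: L0_sub.
Qed.

Lemma L0_mono (S : seq M) k : (L0 S k <= L0 S k.+1)%VS.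
Proof. by rewrite /L0 -[k.+1]addn1 iotaD map_cat flatten_cat span_cat addvSl. Qed.

Lemma mem_L0 (S : seq M) m k w : (0 < m <= k)%N -> w \in words S m -> w \in L0 S k.
Proof.
move=> Hm Hw; apply: memv_span; apply/flattenP; exists (words S m) => //.
by apply/map_f; rewrite mem_iota add1n ltnS.
Qed.

Lemma S_in_L0 (S : seq M) s k : s \in S -> (0 < k)%N -> s \in L0 S k.
Proof.
move=> Hs Hk; apply: (@mem_L0 S 1) => //.
rewrite -[s]mulr1; apply/allpairsP; exists (s, 1) => /=; by rewrite inE eqxx.
Qed.

Lemma SS_in_L0 (S : seq M) s t k : s \in S -> t \in S -> (1 < k)%N -> s * t \in L0 S k.
Proof.
move=> Hs Ht Hk; apply: (@mem_L0 S 2) => //.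
apply/allpairsP; exists (s, t * 1); split => //; last by rewrite mulr1.
apply/allpairsP; exists (t, 1); by rewrite /= inE eqxx.
Qed.

Lemma U_span (S : seq M) : L0 S 1 = <<S>>%VS.
Proof.
apply/eqP; rewrite eqEsubv; apply/andP; split.
  apply/span_subvP => x /flattenP [ws]; rewrite inE => /eqP -> /allpairsP [[a b] [/= Ha]].
  by rewrite inE => /eqP -> ->; rewrite mulr1 memv_span.
by apply/span_subvP => x Hx; apply: S_in_L0.
Qed.


Ltac memt := repeat match goal with
  | |- is_true ((_ + _) \in _) => apply: memvD
  | |- is_true ((- _) \in _) => apply: memvN
  | |- is_true ((_ *: _) \in _) => apply: memvZ
  | |- _ => apply: memv_span; by rewrite !inE eqxx /= ?orbT
  end.

Lemma gen2 (S : seq M) : generates S -> L0 S 2 = fullv.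
Proof.
move=> gS.
set U := L0 S 1; set V := L0 S 2.
have SU : forall s, s \in S -> s \in U by move=> s Hs; apply: S_in_L0.
have UV : (U <= V)%VS by apply: L0_mono.
have UUV : forall x y, x \in U -> y \in U -> x * y \in V.
  move=> x y; rewrite /U U_span; apply: bilin => a b Ha Hb; exact: SS_in_L0.
case: (leqP (\dim U) 2) => hd.
- set b := vbasis U.
  set A := b`_0; set B := b`_1.
  have Ab : forall i, b`_i \in U.
    move=> i; case: (ltnP i (size b)) => Hi.
      by apply: vbasis_mem; apply: mem_nth.
    by rewrite nth_default // mem0v.
  have UAB : (U <= <<[:: A; B]>>)%VS.
    rewrite -(span_basis (vbasisP U)); apply/span_subvP => x /nthP.
    move=> /(_ 0) [i Hi <-]; apply: memv_span.
    move: Hi; rewrite size_tuple => Hi.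
    case: i Hi => [|[|i]] Hi; rewrite ?inE ?eqxx ?orbT //.
    by move: (leq_trans Hi hd).
  set V' := <<[:: A; B; A * A; A * B; B * A; B * B]>>%VS.
  have V'V : (V' <= V)%VS.
    apply/span_subvP => x; rewrite !inE => /orP[/eqP->|/orP[/eqP->|/orP[/eqP->|/orP[/eqP->|/orP[/eqP->|/eqP->]]]]];
      by [apply: (subvP UV); apply: Ab | apply: UUV; apply: Ab].
  have ABV' : (<<[:: A; B]>> <= V')%VS.
    apply/span_subvP => x; rewrite !inE => /orP[/eqP->|/eqP->]; memt.
  have cl : forall x y, x \in <<[:: A; B]>>%VS -> y \in V' -> x * y \in V'.
    apply: bilin => a c; rewrite !inE => /orP[/eqP->|/eqP->];
    rewrite ?inE => /orP[/eqP->|/orP[/eqP->|/orP[/eqP->|/orP[/eqP->|/orP[/eqP->|/eqP->]]]]];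
    rewrite ?i1 ?i2 ?i3 ?i4; memt.
  have V'f : V' = fullv.
    apply: (@closed_full S V' gS).
      by move=> s Hs; apply: (subvP ABV'); apply: (subvP UAB); apply: SU.
    by move=> s x Hs Hx; apply: cl => //; apply: (subvP UAB); apply: SU.
  by apply/eqP; rewrite eqEsubv subvf /= -V'f.
- case: (boolP (all (fun s => all (fun t => s * t \in U) S) S)) => [Hall|].
    have Uf : U = fullv.
      apply: (@closed_full S U gS).
        exact: SU.
      move=> s x Hs Hx.
      have Hx' : x \in <<S>>%VS by rewrite -U_span.
      apply: (@bilin [:: s] S U _ s x) => //; last by apply: memv_span; rewrite inE.
      move=> a c; rewrite inE => /eqP -> Hc; exact: (allP (allP Hall s Hs) c Hc).
    by apply/eqP; rewrite eqEsubv subvf /= -Uf.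
  move=> /allPn [s Hs /allPn [t Ht Hst]].
  have Hlt : (\dim U < \dim V)%N.
    rewrite ltnNge; apply/negP => H.
    have /eqP E : U == V by rewrite eqEdim UV H.
    by move: Hst; rewrite E SS_in_L0.
  apply/eqP; rewrite eqEdim subvf d4 /=.
  by apply: leq_trans Hlt.
Qed.

End Aux.

Theorem mainTheorem3 (F : fieldType) :
  (forall (S : seq 'M[F]_2) (k : nat), generates S -> is_l0 S k -> (k <= 2)%N) /\
  (exists S : seq 'M[F]_2, generates S /\ is_l0 S 2).
Proof.
split.
  move=> S k gS [_ Hj]; rewrite leqNgt; apply/negP => Hk.
  apply: (Hj 2%N Hk); have H2 := @gen2 F S gS.
  apply/eqP; rewrite eqEsubv L0_mono /= H2; exact: subvf.
pose d01 : 'M[F]_2 := delta_mx 0%R 1%R; pose d10 : 'M[F]_2 := delta_mx 1%R 0%R.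
pose S := [:: d01; d10].
have Hd01 : d01 \in S by rewrite inE eqxx.
have Hd10 : d10 \in S by rewrite !inE eqxx orbT.
have dm : forall i j : 'I_2, delta_mx i j \in L0 S 2.
  move=> i j; case: (ord2 i) => ->; case: (ord2 j) => ->.
  - have -> : (delta_mx 0%R 0%R : 'M[F]_2) = (d01 * d10)%R by rewrite -mulmxE mul_delta_mx.
    exact: SS_in_L0.
  - exact: S_in_L0.
  - exact: S_in_L0.
  - have -> : (delta_mx 1%R 1%R : 'M[F]_2) = (d10 * d01)%R by rewrite -mulmxE mul_delta_mx.
    exact: SS_in_L0.
have L2f : L0 S 2 = fullv.
  apply/eqP; rewrite eqEsubv subvf /=; apply/subvP => x _.
  rewrite (matrix_sum_delta x); apply: memv_suml => i _; apply: memv_suml => j _.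
  exact/memvZ/dm.
exists S; split; first by exists 2%N.
split.
  apply/eqP; rewrite eqEsubv L0_mono /= L2f; exact: subvf.
case=> [|[|j]] // _.
  rewrite {1}/L0 /= span_nil => E.
  have : d01 \in L0 S 1 by apply: S_in_L0.
  rewrite -E memv0 => /eqP /matrixP /(_ 0%R 1%R); rewrite !mxE /= => /eqP.
  by rewrite oner_eq0.
move=> E.
have : delta_mx 0%R 0%R \in L0 S 2 by apply: dm.
rewrite -E U_span.
have P : forall x : 'M[F]_2, x \in <<S>>%VS -> x 0%R 0%R = 0%R.
  apply: span_ind.
  - by rewrite mxE.
  - by move=> a b Ha Hb; rewrite mxE Ha Hb addr0.
  - by move=> k a Ha; rewrite mxE Ha mulr0.
  by move=> x; rewrite !inE => /orP[/eqP->|/eqP->]; rewrite mxE.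
move/P; rewrite mxE /= => /eqP; by rewrite oner_eq0.
Qed.
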